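(* Let $A$ be a finite alphabet, let $\mathbf{w}$ be an infinite LSP word over $A$ and let $f$ be a bLSP morphism on $A$. The following are equivalent: (1) $f(\mathbf{w})$ is not LSP; (2) there exist pairwise distinct letters $a,b,c$ such that $\mathbf{w}$ is $(a,b,c)$-fragile and the longest common prefix of $f(b)$ and $f(c)$ is strictly longer than the longest common prefix of $f(a)$ and $f(b)$; (3) there exist pairwise distinct letters $a,b,c$ such that $\mathbf{w}$ is $(a,b,c)$-fragile and $f$ is LSP $(a,b,c)$-breaking.
   Context: A finite word $u$ is a left special factor of a word $w$ if there are distinct letters $x\neq y$ with $xu$ and $yu$ factors of $w$. A word is LSP if every left special factor of it is a prefix of it. A bLSP morphism on $A$ is an endomorphism $f$ of $A^*$ such that there is a letter $\alpha$ with $f(\alpha)=\alpha$ and, for every letter $\beta\neq\alpha$, there is a letter $\gamma$ with $f(\beta)=f(\gamma)\beta$. For pairwise distinct letters $a,b,c$, an infinite word $\mathbf{w}$ is $(a,b,c)$-fragile if there exist a finite word $u$ and distinct letters $\beta\neq\gamma$ such that $ua$ is a prefix of $\mathbf{w}$ and $\beta ub$, $\gamma uc$ are factors of $\mathbf{w}$. A morphism $f$ is LSP $(a,b,c)$-breaking if for every $(a,b,c)$-fragile infinite LSP word $\mathbf{v}$, $f(\mathbf{v})$ is not LSP. *)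

(* Defs.v *)
(* Words over a finite alphabet A : finType.
   Finite words: seq A.  Infinite words: nat -> A.
   Morphisms (endomorphisms of A^* ) are given by their images of letters: A -> seq A. *)
From mathcomp Require Import all_boot.
Set Implicit Arguments. Unset Strict Implicit. Unset Printing Implicit Defensive.

Section Words.
Variable A : finType.

Definition iprefix (u : seq A) (w : nat -> A) : Prop :=
  mkseq w (size u) = u.

Definition ifactor (u : seq A) (w : nat -> A) : Prop :=
  exists i, mkseq (fun j => w (i + j)) (size u) = u.

Definition left_special (u : seq A) (w : nat -> A) : Prop :=
  exists x y : A, x != y /\ ifactor (x :: u) w /\ ifactor (y :: u) w.

Definition LSP (w : nat -> A) : Prop :=
  forall u, left_special u w -> iprefix u w.

Definition fimage (f : A -> seq A) (u : seq A) : seq A := flatten (map f u).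

(* image of an infinite word under f: the i-th letter of f(w) is the i-th
   letter of f(w_0 ... w_i); this is exactly f(w) whenever f is non-erasing
   (in particular for every bLSP morphism). *)
Definition iimage (f : A -> seq A) (w : nat -> A) : nat -> A :=
  fun i => nth (w 0) (fimage f (mkseq w i.+1)) i.

Definition bLSP (f : A -> seq A) : Prop :=
  exists alpha : A, f alpha = [:: alpha] /\
    forall beta : A, beta != alpha -> exists gamma : A, f beta = f gamma ++ [:: beta].

Definition fragile (a b c : A) (w : nat -> A) : Prop :=
  exists (u : seq A) (beta gamma : A), beta != gamma /\
    iprefix (rcons u a) w /\ ifactor (beta :: rcons u b) w /\
    ifactor (gamma :: rcons u c) w.

Definition LSP_breaking (f : A -> seq A) (a b c : A) : Prop :=
  forall v : nat -> A, LSP v -> fragile a b c v -> ~ LSP (iimage f v).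

Fixpoint lcp (s t : seq A) : nat :=
  match s, t with
  | x :: s', y :: t' => if x == y then (lcp s' t').+1 else 0
  | _, _ => 0
  end.

End Words.

(* Main.v *)
Require Import Defs.
From mathcomp Require Import all_boot zify.
From Stdlib Require Import Classical.
Set Implicit Arguments. Unset Strict Implicit. Unset Printing Implicit Defensive.

Section Props.
Variable A : finType.
Variable f : A -> seq A.
Variable alpha : A.
Hypothesis Hfa : f alpha = [:: alpha].
Hypothesis Hfb : forall beta, beta != alpha -> exists gamma, f beta = f gamma ++ [:: beta].

Lemma bprops_n n : forall c, size (f c) <= n ->
  [/\ exists r, f c = alpha :: r /\ alpha \notin r,
      last alpha (f c) = c &
      forall m, 0 < m <= size (f c) -> take m (f c) = f (nth alpha (f c) m.-1)].
Proof.
elim: n => [|n IH] c.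
  case: (eqVneq c alpha) => [->|/Hfb [g ->]]; first by rewrite Hfa.
  by rewrite size_cat /= addn1.
case: (eqVneq c alpha) => [->|cn]; last have [g Hc] := Hfb cn.
  move=> _; rewrite Hfa /=; split => //; first by exists [::].
  move=> m /andP [m0 m1]; have -> : m = 1 by lia. by [].
rewrite Hc size_cat /= addn1 ltnS => /IH [[r [Hr Har]] Hl Ht].
split.
- exists (rcons r c); rewrite Hr /= cats1; split => //.
  by rewrite mem_rcons in_cons negb_or Har andbT eq_sym.
- by rewrite cats1 last_rcons.
- move=> m /andP [m0]; rewrite leq_eqVlt ltnS => /orP [/eqP ->|mlt].
  + rewrite take_oversize ?size_cat ?addn1 // nth_cat ltnn subnn /=.
    by rewrite -Hc.
  + rewrite takel_cat // nth_cat (_ : m.-1 < size (f g)); last by lia.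
    apply: Ht; lia.
Qed.
End Props.

Section Main.
Variable A : finType.
Variable f : A -> seq A.
Variable alpha : A.
Hypothesis Hhd : forall c, exists r, f c = alpha :: r /\ alpha \notin r.
Hypothesis Hlst : forall c, last alpha (f c) = c.
Hypothesis Htk : forall c m, 0 < m <= size (f c) -> take m (f c) = f (nth alpha (f c) m.-1).

Lemma fsize c : 0 < size (f c).
Proof. by have [r [-> _]] := Hhd c. Qed.

Lemma fhead c x0 : nth x0 (f c) 0 = alpha.
Proof. by have [r [-> _]] := Hhd c. Qed.

Lemma falpha c k x0 : k < size (f c) -> nth x0 (f c) k = alpha -> k = 0.
Proof.
have [r [-> Hr]] := Hhd c; case: k => // k /= kl E.
by move: Hr; rewrite -E mem_nth.
Qed.

Arguments falpha {c k x0}.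

Lemma flast c x0 : nth x0 (f c) (size (f c)).-1 = c.
Proof.
have [r [E _]] := Hhd c.
by rewrite (set_nth_default alpha) ?nth_last ?Hlst // prednK ?fsize.
Qed.

Lemma f_inj c d : f c = f d -> c = d.
Proof. by move=> E; rewrite -(Hlst c) -(Hlst d) E. Qed.

Lemma pred_uniq c d k k' x0 : 0 < k < size (f c) -> 0 < k' < size (f d) ->
  nth x0 (f c) k = nth x0 (f d) k' -> nth x0 (f c) k.-1 = nth x0 (f d) k'.-1.
Proof.
move=> /andP [k0 kl] /andP [k0' kl'] E.
have T1' : take k.+1 (f c) = f (nth alpha (f c) k) by apply: (Htk (m := k.+1)); rewrite /= kl.
have T2' : take k'.+1 (f d) = f (nth alpha (f d) k') by apply: (Htk (m := k'.+1)); rewrite /= kl'.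
rewrite /= (set_nth_default alpha) // in E; rewrite [in RHS](set_nth_default alpha) // in E.
rewrite E in T1'.
have Ekk : k = k'.
  have S1 := congr1 size T1'; have S2 := congr1 size T2'.
  rewrite !size_take_min in S1 S2; rewrite -S2 in S1; lia.
subst k'.
rewrite -(nth_take x0 (n0 := k.+1)) ?ltnS ?leq_pred //.
rewrite -[in RHS](nth_take x0 (n0 := k.+1)) ?ltnS ?leq_pred //.
by rewrite T1' T2'.
Qed.

Lemma fimage_cat s t : fimage f (s ++ t) = fimage f s ++ fimage f t.
Proof. by rewrite /fimage map_cat flatten_cat. Qed.
Lemma fimage_cons c s : fimage f (c :: s) = f c ++ fimage f s.
Proof. by []. Qed.
Lemma fimage_nil : fimage f [::] = [::].
Proof. by []. Qed.
Lemma size_fimage s : size s <= size (fimage f s).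
Proof.
rewrite /fimage; elim: s => //= c s IH; rewrite size_cat.
by have := fsize c; lia.
Qed.

Lemma mkseqD (g : nat -> A) m n :
  mkseq g (m + n) = mkseq g m ++ mkseq (fun k => g (m + k)) n.
Proof. rewrite /mkseq iotaD map_cat add0n -(addn0 m) iotaDl -map_comp addn0; congr (_ ++ _); apply: eq_map => k /=; by rewrite addn0. Qed.

Definition sh (j : nat) (w : nat -> A) := fun n => w (j + n).
Definition P (w : nat -> A) j := size (fimage f (mkseq w j)).

Lemma L0 w j m : fimage f (mkseq w (j + m)) = fimage f (mkseq w j) ++ fimage f (mkseq (sh j w) m).
Proof. by rewrite mkseqD fimage_cat. Qed.

Lemma L1' w N1 N2 i x0 y0 : i < size (fimage f (mkseq w N1)) -> i < size (fimage f (mkseq w N2)) ->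
  nth x0 (fimage f (mkseq w N1)) i = nth y0 (fimage f (mkseq w N2)) i.
Proof.
wlog le : N1 N2 x0 y0 / N1 <= N2.
  move=> H h1 h2; case: (leqP N1 N2) => l; first exact: H.
  by symmetry; apply: H => //; apply: ltnW.
move=> h1 h2; rewrite -(subnKC le) L0 nth_cat h1.
by apply: set_nth_default.
Qed.

Lemma L1 w N i x0 : i < size (fimage f (mkseq w N)) ->
  iimage f w i = nth x0 (fimage f (mkseq w N)) i.
Proof.
move=> h; rewrite /iimage; apply: L1' => //.
by have := size_fimage (mkseq w i.+1); rewrite size_mkseq.
Qed.

Lemma L2 w j i : iimage f w (P w j + i) = iimage f (sh j w) i.
Proof.
have hs : i < size (fimage f (mkseq (sh j w) i.+1)).
  by have := size_fimage (mkseq (sh j w) i.+1); rewrite size_mkseq.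
rewrite (L1 (N := j + i.+1) (w 0)); last by rewrite L0 size_cat /P; lia.
rewrite L0 nth_cat /P ltnNge leq_addr /= addKn.
by rewrite (L1 (N := i.+1) (w 0)).
Qed.

Lemma Psucc w j : P w (j + 1) = P w j + size (f (w j)).
Proof. rewrite /P L0 size_cat; congr (_ + _); rewrite /fimage /= /sh. by rewrite addn0 cats0. Qed.

Lemma P0 w : P w 0 = 0.
Proof. by []. Qed.

Lemma L3 w q : exists j k, q = P w j + k /\ k < size (f (w j)).
Proof.
elim: q => [|q [j [k [-> kl]]]]; first by exists 0, 0; rewrite fsize.
case: (ltnP k.+1 (size (f (w j)))) => h.
  by exists j, k.+1; rewrite addnS.
exists (j + 1), 0; rewrite Psucc fsize; split => //; lia.
Qed.

Lemma L4 w j k x0 : k < size (f (w j)) -> iimage f w (P w j + k) = nth x0 (f (w j)) k.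
Proof.
have E : fimage f (mkseq (sh j w) 1) = f (w j) by rewrite /fimage /= /sh addn0 cats0.
by move=> h; rewrite L2 (L1 (N := 1) x0) E.
Qed.


Lemma lcp_size (s t : seq A) : lcp s t <= size s /\ lcp s t <= size t.
Proof.
elim: s t => [|x s IH] [|y t] //=; case: eqP => // _.
by have [h1 h2] := IH t.
Qed.

Lemma lcp_take n (s t : seq A) : n <= lcp s t -> take n s = take n t.
Proof.
elim: s t n => [|x s IH] [|y t] [|n] //=; case: eqP => // -> h.
by rewrite (IH t n).
Qed.

Lemma lcp_ge n (s t : seq A) : n <= size s -> n <= size t -> take n s = take n t -> n <= lcp s t.
Proof.
elim: s t n => [|x s IH] [|y t] [|n] //= h1 h2 [-> E].
by rewrite eqxx ltnS; apply: IH.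
Qed.

Lemma I0 w k : k < size (f (w 0)) -> iimage f w k = nth alpha (f (w 0)) k.
Proof. by move=> h; have := L4 (w:=w) (j:=0) alpha h; rewrite P0 add0n. Qed.

Lemma I1 w j : iimage f w (size (f (w 0)) + j) = iimage f (sh 1 w) j.
Proof. by have := L2 w 1 j; rewrite (Psucc w 0) P0 add0n. Qed.

Lemma Ia w : iimage f w 0 = alpha.
Proof. by rewrite I0 ?fsize // fhead. Qed.

Lemma decomp_exist_fin s m : 0 < m <= size (fimage f s) ->
  exists k n, [/\ k < size s, 0 < n <= size (f (nth alpha s k)) &
    take m (fimage f s) = fimage f (take k s) ++ take n (f (nth alpha s k))].
Proof.
elim: s m => [|c s IH] m /=; first by rewrite /fimage /=; lia.
rewrite fimage_cons size_cat => /andP [m0 ml].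
case: (leqP m (size (f c))) => h.
  by exists 0, m; rewrite /= m0 h takel_cat.
have [k [n [kl nl E]]] := IH (m - size (f c)) (ltac:(lia)).
exists k.+1, n; split => //; rewrite take_cat ltnNge (ltnW h) /= E.
by rewrite fimage_cons catA.
Qed.

Lemma Rhead vr n c : 0 < n <= size (f c) ->
  0 < size (fimage f vr ++ take n (f c)) /\ nth alpha (fimage f vr ++ take n (f c)) 0 = alpha.
Proof.
move=> /andP [n0 nl]; case: vr => [|c' vr].
  by rewrite /= size_take_min nth_take // fhead; split => //; lia.
by rewrite fimage_cons -catA /= size_cat nth_cat fsize fhead; split => //; have := fsize c'; lia.
Qed.

Lemma decomp_unique v : forall w n c, 0 < n <= size (f c) ->
  (forall j, j < size (fimage f v) + n ->
     iimage f w j = nth alpha (fimage f v ++ take n (f c)) j) ->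
  [/\ mkseq w (size v) = v, n <= size (f (w (size v))) &
      take n (f (w (size v))) = take n (f c)].
Proof.
elim: v => [|c1 vr IH] w n c hn H.
  move: H; rewrite /= => H.
  case/andP: (hn) => n0 nl.
  have nl' : n <= size (f (w 0)).
    rewrite leqNgt; apply/negP => lt.
    have := H (size (f (w 0))) lt; rewrite -(addn0 (size _)) I1 Ia addn0 nth_take // => E.
    have E0 : size (f (w 0)) = 0 by apply: (falpha (c:=c) _ (esym E)); lia.
    by have := fsize (w 0); rewrite E0.
  split => //; apply: (@eq_from_nth _ alpha); first by rewrite !size_takel.
  move=> i; rewrite size_takel // => il.
  by rewrite nth_take // -I0 ?H //; lia.
have [R0 Rh] := Rhead vr hn.
set R := fimage f vr ++ take n (f c) in R0 Rh H.
have HH : forall j, j < size (f c1) + size R -> iimage f w j = nth alpha (f c1 ++ R) j.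
  move=> j jl; rewrite /R catA -fimage_cons; apply: H.
  move: jl; rewrite /R fimage_cons !size_cat size_takel; first lia.
  by case/andP: hn.
have s1p := fsize c1; have s0p := fsize (w 0).
have Es : size (f c1) = size (f (w 0)).
  case: (ltngtP (size (f c1)) (size (f (w 0)))) => // lt.
  - have := HH (size (f c1)) (ltac:(lia)); rewrite nth_cat ltnn subnn Rh I0 // => E.
    by have := falpha lt E; lia.
  - have := HH (size (f (w 0))) (ltac:(lia)); rewrite -{1}(addn0 (size _)) I1 Ia nth_cat lt => E.
    by have := falpha lt (esym E); lia.
have Ec : c1 = w 0.
  apply: f_inj; apply: (@eq_from_nth _ alpha) => // i il.
  by rewrite -I0 -?Es // HH ?nth_cat ?il //; lia.
have IHs : forall j, j < size (fimage f vr) + n -> iimage f (sh 1 w) j = nth alpha R j.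
  move=> j jl; rewrite -I1 -Es HH ?nth_cat ?ltnNge ?leq_addr ?addKn //.
  rewrite /R size_cat size_takel; last by case/andP: hn.
  lia.
have [IH1 IH2 IH3] := IH (sh 1 w) n c hn IHs.
split => //.
by rewrite /= -add1n mkseqD IH1 /= Ec.
Qed.


Lemma mk_nth (g : nat -> A) n s : mkseq g n = s -> forall j, j < n -> g j = nth alpha s j.
Proof. by move=> <- j jn; rewrite nth_mkseq. Qed.

Lemma nth_mk (g : nat -> A) s x0 : (forall j, j < size s -> g j = nth x0 s j) -> mkseq g (size s) = s.
Proof.
move=> H; apply: (@eq_from_nth _ x0); rewrite size_mkseq // => j jl.
by rewrite nth_mkseq // H.
Qed.

Lemma fact_of_prefix (g : nat -> A) S S1 T S2 :
  (forall i, i < size S -> g i = nth alpha S i) -> S = S1 ++ T ++ S2 -> ifactor T g.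
Proof.
move=> H E; exists (size S1); apply: (nth_mk (x0 := alpha)) => j jl.
rewrite H; last by rewrite E !size_cat; lia.
by rewrite E nth_cat ltnNge leq_addr /= addKn nth_cat jl.
Qed.

Lemma ifactor_sh j w T : ifactor T (iimage f (sh j w)) -> ifactor T (iimage f w).
Proof.
case=> i Hi; exists (P w j + i); rewrite -[in RHS]Hi; apply: eq_mkseq => k.
by rewrite -addnA L2.
Qed.

Lemma fimage_rcons s x : fimage f (rcons s x) = fimage f s ++ f x.
Proof. by rewrite -cats1 fimage_cat /fimage /= cats0. Qed.

Lemma dir21 w a b c : fragile a b c w -> lcp (f a) (f b) < lcp (f b) (f c) -> ~ LSP (iimage f w).
Proof.
case=> u [be [ga [bg [Hp [[i1 H1] [i2 H2]]]]]] lt HL.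
set n := lcp (f b) (f c).
set p := take n (f b).
set U := fimage f u ++ p.
have occ : forall (be' b' : A) i,
    mkseq (fun j => w (i + j)) (size (be' :: rcons u b')) = be' :: rcons u b' ->
    take n (f b') = p -> ifactor (be' :: U) (iimage f w).
  move=> be' b' i Hi Ht; apply: (ifactor_sh (j := i)).
  have [r [Er _]] := Hhd be'.
  apply: (fact_of_prefix (S := fimage f (be' :: rcons u b')) (S1 := belast alpha r) (S2 := drop n (f b'))).
    move=> k kl; rewrite (L1 (N := size (be' :: rcons u b')) alpha); first by rewrite /sh Hi.
    by rewrite /sh Hi.
  have Eb : f be' = rcons (belast alpha r) be'.
    by rewrite {1}Er lastI; congr rcons; rewrite -(Hlst be') Er.
  rewrite fimage_cons fimage_rcons Eb cat_rcons /U -Ht.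
  by rewrite cat_cons -catA cat_take_drop.
have LS : left_special U (iimage f w).
  exists be, ga; split => //; split; first by apply: (occ be b i1).
  apply: (occ ga c i2) => //; rewrite /p; symmetry; apply: lcp_take; exact: leqnn.
have /mk_nth HU := HL U LS.
have [nb nc] := lcp_size (f b) (f c).
set d := w (size u).+1.
have Ew : mkseq w (size u).+2 = rcons u a ++ [:: d].
  have -> : (size u).+2 = size (rcons u a) + 1 by rewrite size_rcons addn1.
  by rewrite mkseqD Hp /= size_rcons /mkseq /= addn0.
have ES : fimage f (mkseq w (size u).+2) = fimage f u ++ f a ++ f d.
  by rewrite Ew fimage_cat fimage_rcons /fimage /= cats0 -catA.
have HS : forall j, j < size (fimage f u ++ f a ++ f d) ->
    iimage f w j = nth alpha (fimage f u ++ f a ++ f d) j.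
  by move=> j jl; rewrite -ES; apply: L1; rewrite ES.
have sizeU : size U = size (fimage f u) + n by rewrite /U size_cat size_takel.
case: (leqP n (size (f a))) => h.
  have : take n (f a) = p.
    apply: (@eq_from_nth _ alpha); first by rewrite !size_takel.
    move=> j; rewrite size_takel // => jl.
    rewrite nth_take //.
    have jl' : j < size (f a) by lia.
    have := HS (size (fimage f u) + j) (ltac:(rewrite !size_cat; lia)).
    rewrite nth_cat ltnNge leq_addr /= addKn nth_cat jl'.
    move=> <-; rewrite HU; last by rewrite sizeU; lia.
    by rewrite /U nth_cat ltnNge leq_addr /= addKn.
  move=> Et; have := lcp_ge h nb; rewrite Et => /(_ erefl) h2.
  by move: lt; rewrite -/n; lia.
have := HS (size (fimage f u) + size (f a)) (ltac:(rewrite !size_cat; have := fsize d; lia)).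
rewrite HU; last by rewrite sizeU; lia.
rewrite /U nth_cat ltnNge leq_addr /= addKn nth_take //.
rewrite nth_cat ltnNge leq_addr /= addKn nth_cat ltnn subnn fhead => E.
have {E} E : nth alpha (f b) (size (f a)) = alpha by [].
have E0 : size (f a) = 0 by apply: (falpha (c:=b) _ E); lia.
by have := fsize a; rewrite E0.
Qed.


Lemma mk_cons w J k : mkseq (sh J w) k.+1 = w J :: mkseq (sh J.+1 w) k.
Proof.
rewrite -add1n mkseqD /= /mkseq /= /sh addn0; congr (_ :: _).
by apply: eq_map => t; rewrite addnA addn1.
Qed.

Lemma mk_rcons (g : nat -> A) k : mkseq g k.+1 = rcons (mkseq g k) (g k).
Proof. by rewrite -addn1 mkseqD -cats1 /mkseq /= addn0. Qed.

Lemma occ_alpha w i : iimage f w i.+1 = alpha -> exists j, i.+1 = P w j.+1 /\ iimage f w i = w j.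
Proof.
have [j [k [-> kl]]] := L3 w i => E.
case: (ltnP k.+1 (size (f (w j)))) => h.
  move: E; rewrite -addnS (L4 alpha) // => E.
  by have := falpha h E.
have ek : k.+1 = size (f (w j)) by lia.
exists j; split; first by rewrite -[j.+1]addn1 Psucc -ek addnS.
by rewrite (L4 alpha) // (_ : k = (size (f (w j))).-1) ?flast //; lia.
Qed.

Lemma occ_nonalpha w i i' : iimage f w i.+1 <> alpha -> iimage f w i.+1 = iimage f w i'.+1 ->
  iimage f w i = iimage f w i'.
Proof.
have [j [k [Ei kl]]] := L3 w i; have [j' [k' [Ei' kl']]] := L3 w i'.
have gen : forall i j k, i = P w j + k -> k < size (f (w j)) -> iimage f w i.+1 <> alpha ->
    k.+1 < size (f (w j)).
  move=> i0 j0 k0 -> kl0 Na; rewrite ltnNge; apply/negP => h.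
  have ek : k0.+1 = size (f (w j0)) by lia.
  apply: Na; rewrite -addnS ek -Psucc -(addn0 (P w (j0 + 1))) (L4 alpha) ?fsize // fhead //.
move=> Na E.
have h1 := gen _ _ _ Ei kl Na.
have h2 : k'.+1 < size (f (w j')) by apply: (gen _ _ _ Ei' kl'); rewrite -E.
move: E; rewrite Ei Ei' -!addnS !(L4 alpha) // => E.
by apply: (pred_uniq (k := k.+1) (k' := k'.+1) (x0 := alpha) _ _ E); lia.
Qed.


Lemma take_mk (g : nat -> A) k N : k <= N -> take k (mkseq g N) = mkseq g k.
Proof.
move=> h; rewrite -(subnKC h) mkseqD take_cat size_mkseq ltnn subnn take0 cats0 //.
Qed.

Lemma dir12 w : LSP w -> ~ LSP (iimage f w) ->
  exists a b c : A, [/\ a != b, b != c & a != c] /\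
       fragile a b c w /\ lcp (f a) (f b) < lcp (f b) (f c).
Proof.
move=> Hw HnL.
have [U [LS NP]] : exists U, left_special U (iimage f w) /\ ~ iprefix U (iimage f w).
  by apply: NNPP => H; apply: HnL => U LS; apply: NNPP => NP; apply: H; exists U.
case: LS => x [y [xy [[i Hi] [i' Hi']]]].
have Pi := mk_nth Hi; have Pi' := mk_nth Hi'.
case: U Hi Hi' Pi Pi' NP => [|h U'] Hi Hi' Pi Pi' NP; first by exfalso; apply: NP.
set U := h :: U' in Hi Hi' Pi Pi' NP.
have Exi : iimage f w i = x by have := Pi 0 erefl; rewrite addn0.
have Eyi : iimage f w i' = y by have := Pi' 0 erefl; rewrite addn0.
have Ehi : iimage f w i.+1 = h by have := Pi 1 erefl; rewrite addn1.
have Ehi' : iimage f w i'.+1 = h by have := Pi' 1 erefl; rewrite addn1.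
have ha : h = alpha.
  apply: NNPP => Nh; move/eqP: xy; apply; rewrite -Exi -Eyi.
  by apply: occ_nonalpha; rewrite ?Ehi ?Ehi'.
have [J [EJ Ex]] := occ_alpha (ltac:(by rewrite Ehi ha) : iimage f w i.+1 = alpha).
have [J' [EJ' Ey]] := occ_alpha (ltac:(by rewrite Ehi' ha) : iimage f w i'.+1 = alpha).
rewrite Exi in Ex; rewrite Eyi in Ey.
have OU : forall J0 i0 (x1 : A), i0.+1 = P w J0 ->
    (forall j, j < size (x1 :: U) -> iimage f w (i0 + j) = nth alpha (x1 :: U) j) ->
    forall j, j < size U -> iimage f (sh J0 w) j = nth alpha U j.
  move=> J0 i0 x1 E0 H j jl; rewrite -L2 -E0 addSnnS.
  by have := H j.+1 jl; rewrite /=.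
have O1 := OU J.+1 i x EJ Pi.
have O2 := OU J'.+1 i' y EJ' Pi'.
set s := mkseq (sh J.+1 w) (size U).
have sfs : size U <= size (fimage f s) by have := size_fimage s; rewrite size_mkseq.
have Us : take (size U) (fimage f s) = U.
  apply: (@eq_from_nth _ alpha); first by rewrite size_takel.
  move=> j; rewrite size_takel // => jl; rewrite nth_take //.
  have := L1 alpha (w := sh J.+1 w) (N := size U) (i := j) (leq_trans jl sfs).
  by rewrite -/s => <-; apply: O1.
have U0 : 0 < size U <= size (fimage f s) by rewrite sfs.
have [k [n [kl nl EU]]] := decomp_exist_fin U0.
rewrite Us in EU.
rewrite size_mkseq in kl.
rewrite /s nth_mkseq // take_mk ?(ltnW kl) // in nl EU.
set v := mkseq (sh J.+1 w) k in EU.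
set z := sh J.+1 w k in nl EU.
have sv : size v = k by rewrite size_mkseq.
have sU : size U = size (fimage f v) + n.
  by rewrite EU size_cat size_takel //; case/andP: nl.
have [E1 nl' E3] := decomp_unique (w := sh J'.+1 w) (v := v) (n := n) (c := z) nl
  (ltac:(move=> j jl; rewrite -EU; apply: O2; rewrite sU //)).
rewrite sv in E1 nl' E3.
set z' := sh J'.+1 w k in nl' E3.
have fac : forall Jx, mkseq (sh Jx.+1 w) k = v -> ifactor (w Jx :: v) w.
  move=> Jx Ev; exists Jx; change (mkseq (sh Jx w) (size v).+1 = w Jx :: v).
  by rewrite mk_cons sv Ev.
have facr : forall Jx, mkseq (sh Jx.+1 w) k = v -> ifactor (w Jx :: rcons v (sh Jx.+1 w k)) w.
  move=> Jx Ev; exists Jx; change (mkseq (sh Jx w) (size (rcons v (sh Jx.+1 w k))).+1 = w Jx :: rcons v (sh Jx.+1 w k)).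
  by rewrite mk_cons size_rcons sv mk_rcons Ev.
have xy' : w J != w J' by rewrite -Ex -Ey.
have vp : mkseq w k = v.
  have := Hw v (ex_intro _ (w J) (ex_intro _ (w J') (conj xy' (conj (fac J erefl) (fac J' E1))))).
  by rewrite /iprefix sv.
set a := w k.
have key : ~ (n <= size (f a) /\ take n (f a) = take n (f z)).
  case=> na Ea; apply: NP; apply: (nth_mk (x0 := alpha)) => j jl.
  have jl2 : j < size (fimage f (mkseq w k.+1)) by rewrite mk_rcons vp fimage_rcons size_cat -/a; move: jl; rewrite sU; lia.
  rewrite (L1 alpha jl2) mk_rcons vp fimage_rcons.
  rewrite EU !nth_cat; case: ifP => // jv.
  by rewrite -Ea nth_take //; move: jl jv; rewrite sU; lia.
have nl2 : n <= size (f z) by case/andP: nl.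
have zz' : z != z'.
  apply/eqP => Ez; apply: key.
  have LSz : left_special (rcons v z) w.
    exists (w J), (w J'); split => //; split; first exact: facr J erefl.
    rewrite Ez; exact: facr J' E1.
  have := Hw _ LSz.
  rewrite /iprefix size_rcons sv mk_rcons vp => /rcons_inj [] Eaz.
  by rewrite /a Eaz.
have az : a != z by apply/eqP => Eaz; apply: key; rewrite Eaz.
have az' : a != z' by apply/eqP => Eaz; apply: key; rewrite Eaz -E3.
exists a, z, z'; split; first by rewrite az zz' az'.
split.
  exists v, (w J), (w J'); split => //; split.
    by rewrite /iprefix size_rcons sv mk_rcons vp.
  by split; [apply: facr | rewrite -/z'; apply: facr].
have h1 : n <= lcp (f z) (f z') by apply: lcp_ge => //; rewrite E3.
rewrite ltnNge; apply/negP => h2.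
apply: key; have h3 : n <= lcp (f a) (f z) by lia.
split; first by have := lcp_size (f a) (f z); lia.
exact: lcp_take.
Qed.

End Main.
Theorem lemma3 (A : finType) (w : nat -> A) (f : A -> seq A) :
  LSP w -> bLSP f ->
  (~ LSP (iimage f w) <->
     exists a b c : A, [/\ a != b, b != c & a != c] /\
       fragile a b c w /\ lcp (f a) (f b) < lcp (f b) (f c)) /\
  ((exists a b c : A, [/\ a != b, b != c & a != c] /\
       fragile a b c w /\ lcp (f a) (f b) < lcp (f b) (f c)) <->
   (exists a b c : A, [/\ a != b, b != c & a != c] /\
       fragile a b c w /\ LSP_breaking f a b c)).
Proof.
move=> Hw [alpha [Hfa Hfb]].
have BP := fun c => bprops_n Hfa Hfb (leqnn (size (f c))).
have Hhd : forall c, exists r, f c = alpha :: r /\ alpha \notin r by move=> c; case: (BP c).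
have Hlst : forall c, last alpha (f c) = c by move=> c; case: (BP c).
have Htk : forall c m, 0 < m <= size (f c) -> take m (f c) = f (nth alpha (f c) m.-1).
  by move=> c; case: (BP c).
split; split.
- exact: (dir12 Hhd Hlst Htk).
- by case=> a [b [c [_ [Fr Lt]]]]; apply: (dir21 Hhd Hlst Fr Lt).
- case=> a [b [c [D [Fr Lt]]]]; exists a, b, c; split => //; split => //.
  by move=> v _ Fv; apply: (dir21 Hhd Hlst Fv Lt).
- case=> a [b [c [D [Fr Br]]]].
  exact: (dir12 Hhd Hlst Htk Hw (Br w Hw Fr)).
Qed.
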